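(* For each $i\in\{1,\dots,n\}$ let a linear basis warp be given by a feature map $\beta_i:\mathbb{R}^d\to\mathbb{R}^{l_i}$, a regularization matrix $Z_i\in\mathbb{R}^{k_i\times l_i}$ and a weight $\mu_i\ge0$, and let $D_i\in\mathbb{R}^{d\times m}$ be a datum shape with $\mathcal{B}_i=\mathcal{B}_i(D_i)$, such that $M_i=\mathcal{B}_i\mathcal{B}_i^{\top}+\mu_iZ_i^{\top}Z_i$ is invertible. Suppose each of these warps contains free-translations. Then, with $Q_i=\mathcal{B}_i^{\top}M_i^{-1}\mathcal{B}_i$, $\mathcal{Q}_{II}=\sum_iQ_i$ and $\mathcal{P}_{II}=nI_m-\mathcal{Q}_{II}$, all of the following hold: $\mathcal{P}_{II}\mathbf{1}=0$; $\mathcal{Q}_{II}\mathbf{1}=n\mathbf{1}$; $Q_i\mathbf{1}=\mathbf{1}$ for all $i$; $\mathrm{tr}((S+t\mathbf{1}^{\top})\mathcal{P}_{II}(S+t\mathbf{1}^{\top})^{\top})=\mathrm{tr}(S\mathcal{P}_{II}S^{\top})$ for all $S\in\mathbb{R}^{d\times m}$, $t\in\mathbb{R}^d$; and for every $i$ there is $x_i$ with $\mathcal{B}_i^{\top}x_i=\mathbf{1}$ and, if $\mu_i>0$, $Z_ix_i=0$.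
   Context: A linear basis warp (LBW) with feature map $\beta:\mathbb{R}^d\to\mathbb{R}^l$ is the map $p\mapsto W^{\top}\beta(p)$ with parameter $W\in\mathbb{R}^{l\times d}$, regularized by $\mu\|ZW\|_F^2$. For a point cloud $D=[p_1,\dots,p_m]\in\mathbb{R}^{d\times m}$, $\mathcal{B}(D)=[\beta(p_1),\dots,\beta(p_m)]\in\mathbb{R}^{l\times m}$. The LBW $(\beta,Z,\mu)$ contains free-translations if there exists $x\in\mathbb{R}^l$, independent of the input, with $\beta(p)^{\top}x=1$ for all $p\in\mathbb{R}^d$ (i.e. $\mathcal{B}(D)^{\top}x=\mathbf{1}$ for every point cloud $D$), and, if $\mu>0$, additionally $Zx=0$. $\mathbf{1}$ denotes the all-ones vector. *)

(* Defs.v *)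
From HB Require Import structures.
From mathcomp Require Import all_boot all_order all_algebra.
Set Implicit Arguments. Unset Strict Implicit. Unset Printing Implicit Defensive.
Import Order.TTheory GRing.Theory Num.Theory.
Local Open Scope ring_scope.

Definition ones (R : realFieldType) (m : nat) : 'cV[R]_m := const_mx 1.

Definition calB (R : realFieldType) (d l m : nat)
  (beta : 'cV[R]_d -> 'cV[R]_l) (D : 'M[R]_(d, m)) : 'M[R]_(l, m) :=
  \matrix_(r < l, j < m) beta (col j D) r 0.

Definition contains_free_translations (R : realFieldType) (d l k : nat)
  (beta : 'cV[R]_d -> 'cV[R]_l) (Z : 'M[R]_(k, l)) (mu : R) : Prop :=
  exists x : 'cV[R]_l,
    (forall p : 'cV[R]_d, (beta p)^T *m x = 1%:M) /\ (0 < mu -> Z *m x = 0).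

Definition Mmat (R : realFieldType) (d l k m : nat)
  (beta : 'cV[R]_d -> 'cV[R]_l) (Z : 'M[R]_(k, l)) (mu : R) (D : 'M[R]_(d, m))
  : 'M[R]_l :=
  calB beta D *m (calB beta D)^T + mu *: (Z^T *m Z).

Definition Qmat (R : realFieldType) (d l k m : nat)
  (beta : 'cV[R]_d -> 'cV[R]_l) (Z : 'M[R]_(k, l)) (mu : R) (D : 'M[R]_(d, m))
  : 'M[R]_m :=
  (calB beta D)^T *m invmx (Mmat beta Z mu D) *m calB beta D.

(* Main.v *)
Require Import Defs.
From HB Require Import structures.
From mathcomp Require Import all_boot all_order all_algebra.
Import Order.TTheory GRing.Theory Num.Theory.
Local Open Scope ring_scope.

Lemma calB_ones (R : realFieldType) (d l m : nat)
  (beta : 'cV[R]_d -> 'cV[R]_l) (D : 'M[R]_(d, m)) (x : 'cV[R]_l) :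
  (forall p : 'cV[R]_d, (beta p)^T *m x = 1%:M) ->
  (calB beta D)^T *m x = ones R m.
Proof.
move=> hx; apply/matrixP => j k; rewrite /ones !mxE.
have := congr1 (fun M : 'M[R]_1 => M 0 0) (hx (col j D)).
rewrite /= !mxE eqxx /= => h.
apply: etrans h; rewrite (ord1 k); apply: eq_bigr => r _; by rewrite !mxE.
Qed.

Lemma Mmat_sym (R : realFieldType) (d l k m : nat)
  (beta : 'cV[R]_d -> 'cV[R]_l) (Z : 'M[R]_(k, l)) (mu : R) (D : 'M[R]_(d, m)) :
  (Mmat beta Z mu D)^T = Mmat beta Z mu D.
Proof. by rewrite /Mmat raddfD /= linearZ /= !trmx_mul !trmxK. Qed.

Lemma Qmat_sym (R : realFieldType) (d l k m : nat)
  (beta : 'cV[R]_d -> 'cV[R]_l) (Z : 'M[R]_(k, l)) (mu : R) (D : 'M[R]_(d, m)) :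
  (Qmat beta Z mu D)^T = Qmat beta Z mu D.
Proof. by rewrite /Qmat !trmx_mul trmxK trmx_inv Mmat_sym mulmxA. Qed.

Lemma Qmat_ones (R : realFieldType) (d l k m : nat)
  (beta : 'cV[R]_d -> 'cV[R]_l) (Z : 'M[R]_(k, l)) (mu : R) (D : 'M[R]_(d, m)) :
  0 <= mu -> Mmat beta Z mu D \in unitmx ->
  contains_free_translations beta Z mu ->
  Qmat beta Z mu D *m ones R m = ones R m.
Proof.
move=> hmu hU [x [hx hz]].
have hB := @calB_ones _ _ _ _ _ D _ hx.
have hM : Mmat beta Z mu D *m x = calB beta D *m ones R m.
  rewrite /Mmat mulmxDl -!mulmxA hB -scalemxAl -mulmxA.
  have [->|mu0] := eqVneq mu 0; first by rewrite scale0r addr0.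
  by rewrite hz ?mulmx0 ?scaler0 ?addr0 // lt0r mu0.
by rewrite /Qmat -!mulmxA -hM mulKmx.
Qed.

Theorem proposition4 (R : realFieldType) (n d m : nat)
  (l k : 'I_n -> nat)
  (beta : forall i : 'I_n, 'cV[R]_d -> 'cV[R]_(l i))
  (Z : forall i : 'I_n, 'M[R]_(k i, l i))
  (mu : 'I_n -> R)
  (D : 'I_n -> 'M[R]_(d, m))
  (hmu : forall i, 0 <= mu i)
  (hinv : forall i, Mmat (beta i) (Z i) (mu i) (D i) \in unitmx)
  (hfree : forall i, contains_free_translations (beta i) (Z i) (mu i)) :
  let QII : 'M[R]_m := \sum_(i < n) Qmat (beta i) (Z i) (mu i) (D i) in
  let PII : 'M[R]_m := (n%:R)%:M - QII in
  [/\ PII *m ones R m = 0,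
      QII *m ones R m = n%:R *: ones R m,
      (forall i, Qmat (beta i) (Z i) (mu i) (D i) *m ones R m = ones R m),
      (forall (S : 'M[R]_(d, m)) (t : 'cV[R]_d),
         \tr ((S + t *m (ones R m)^T) *m PII *m (S + t *m (ones R m)^T)^T)
         = \tr (S *m PII *m S^T))
    & (forall i, exists x : 'cV[R]_(l i),
         (calB (beta i) (D i))^T *m x = ones R m /\
         (0 < mu i -> Z i *m x = 0))].
Proof.
move=> QII PII.
have hQ i : Qmat (beta i) (Z i) (mu i) (D i) *m ones R m = ones R m.
  exact: Qmat_ones.
have hQII : QII *m ones R m = n%:R *: ones R m.
  rewrite /QII mulmx_suml (eq_bigr (fun _ => ones R m)) ?sumr_const ?card_ord;
    last by move=> i _; exact: hQ.
  by rewrite scaler_nat.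
have hP : PII *m ones R m = 0.
  by rewrite /PII mulmxBl hQII mul_scalar_mx subrr.
have hPs : PII^T = PII.
  rewrite /PII raddfB /= tr_scalar_mx /QII.
  congr (_ - _); rewrite raddf_sum.
  by apply: eq_bigr => i _; exact: Qmat_sym.
split => //.
- move=> S t.
  have h1 : PII *m (t *m (ones R m)^T)^T = 0.
    by rewrite trmx_mul trmxK mulmxA hP mul0mx.
  have h2 : t *m (ones R m)^T *m PII = 0.
    by rewrite -mulmxA -hPs -trmx_mul hP trmx0 mulmx0.
  have -> : (S + t *m (ones R m)^T)^T = S^T + (t *m (ones R m)^T)^T.
    by apply/matrixP => a b; rewrite !mxE.
  by rewrite -mulmxA mulmxDr h1 addr0 mulmxA mulmxDl h2 addr0.
- move=> i; have [x [hx hz]] := hfree i.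
  by exists x; split => //; exact: calB_ones.
Qed.
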